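(* Let $k\ge2$ and $\Delta\ge 2^{4^k+1}$ be integers. Let $Q=\{Q_1,\dots,Q_\Delta\}$ be an arbitrary multiset in $h_1(\Delta)$ (as defined in the context). Then there is a unique element $P_\infty\in Q$ that has multiplicity at least $\Delta-2^{4^k}$ in $Q$ and contains the trit sequence $11\dots1$ (of length $k$).
   Context: A trit sequence of length $k$ is a word $a_1\dots a_k$ with $a_j\in\{0,1,2\}$; it ''has an $i$ at position $j$'' if $a_j=i$. $h_1(\Delta)$ is the set of all multisets $\{W_1,\dots,W_\Delta\}$ (of cardinality $\Delta$) of sets $W_i$ of trit sequences of length $k$ such that (A) for any choice $w_1\in W_1,\dots,w_\Delta\in W_\Delta$ there is an index $1\le j\le k$ such that the number of $w_i$ with a $2$ at position $j$ is strictly greater than the number of $w_i$ with a $0$ at position $j$, and at most $k$ of the $w_i$ have a $0$ at position $j$; and (B) the multiset is maximal with property (A): adding any new trit sequence of length $k$ to any single $W_i$ yields a multiset violating (A). (This is the node-constraint of the problem obtained by applying one round of the simplified speedup transformation to superweak $k$-coloring.) *)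

(* Defs.v *)
From mathcomp Require Import all_boot.
Set Implicit Arguments. Unset Strict Implicit. Unset Printing Implicit Defensive.

Definition trit (k : nat) : finType := {ffun 'I_k -> 'I_3}.

(* A multiset {W_1,...,W_Delta} of sets of trit sequences is represented by
   an indexed family W : 'I_Delta -> {set trit k}; properties (A),(B) are
   invariant under reindexing, so this represents the multiset faithfully. *)
Definition tfamily (k D : nat) := {ffun 'I_D -> {set trit k}}.

Definition cnt (k D : nat) (w : 'I_D -> trit k) (j : 'I_k) (t : nat) : nat :=
  #|[set i : 'I_D | (w i j : nat) == t]|.

Definition propA (k D : nat) (W : tfamily k D) : Prop :=
  forall w : 'I_D -> trit k, (forall i, w i \in W i) ->
    exists j : 'I_k, cnt w j 0 < cnt w j 2 /\ cnt w j 0 <= k.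

Definition add_to (k D : nat) (W : tfamily k D) (i : 'I_D) (t : trit k)
  : tfamily k D :=
  [ffun i' => if i' == i then t |: W i else W i'].

Definition in_h1 (k D : nat) (W : tfamily k D) : Prop :=
  propA W /\
  forall (i : 'I_D) (t : trit k), t \notin W i -> ~ propA (add_to W i t).

Definition mult (k D : nat) (W : tfamily k D) (P : {set trit k}) : nat :=
  #|[set i : 'I_D | W i == P]|.

Definition ones (k : nat) : trit k := [ffun _ => inord 1].

(* Main.v *)
Require Import Defs.
From mathcomp Require Import all_boot zify.
From Stdlib Require Import Classical.
Set Implicit Arguments. Unset Strict Implicit. Unset Printing Implicit Defensive.

Definition upd (k D : nat) (w : 'I_D -> trit k) (b : 'I_D) (u : trit k) :=
  fun i => if i == b then u else w i.

Definition bad (k D : nat) (w : 'I_D -> trit k) :=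
  forall j : 'I_k, ~~ ((cnt w j 0 < cnt w j 2) && (cnt w j 0 <= k)).

Lemma cnt_upd k D (w : 'I_D -> trit k) b (u : trit k) j x :
  cnt (upd w b u) j x + ((w b j : nat) == x) = cnt w j x + ((u j : nat) == x).
Proof.
rewrite /cnt (cardsD1 b [set i | _]) (cardsD1 b [set i | (w i j : nat) == x]).
rewrite !inE /upd eqxx.
have -> : [set i | (((if i == b then u else w i) j : nat) == x)] :\ b
        = [set i | (w i j : nat) == x] :\ b.
  by apply/setP => i; rewrite !inE; case: (i == b).
lia.
Qed.

Lemma upd_bad k D (w : 'I_D -> trit k) b (u : trit k) : bad w ->
  (forall j, if k < cnt w j 0 then ((w b j : nat) == 0) ->
       ((u j : nat) == 0) || (k.+1 < cnt w j 0) else u j = w b j) ->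
  bad (upd w b u).
Proof.
move=> Hb H j; have := Hb j; have := H j.
have e0 := cnt_upd w b u j 0; have e2 := cnt_upd w b u j 2.
case: ifP => K.
- move=> Hz _; apply/negP => /andP [_ Hle].
  case: (eqVneq (w b j : nat) 0) Hz e0 => [Ew|Nw] Hz e0.
    move: (Hz isT) => /orP [Eu|Big].
      by rewrite Eu in e0; lia.
    by lia.
  by lia.
- move=> Eu; rewrite Eu in e0 e2.
  have -> : cnt (upd w b u) j 0 = cnt w j 0 by lia.
  by have -> : cnt (upd w b u) j 2 = cnt w j 2 by lia.
Qed.

Lemma card_bigcup_le (T I : finType) (P : pred I) (F : I -> {set T}) :
  #|\bigcup_(i | P i) F i| <= \sum_(i | P i) #|F i|.
Proof.
apply: (@big_ind2 _ _ (fun (A : {set T}) (n : nat) => is_true (#|A| <= n))).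

- by rewrite cards0.
- move=> A1 n1 A2 n2 h1 h2; move: (leq_card_setU A1 A2) => [h _].
  by apply: leq_trans h _; exact: leq_add.
- by [].
Qed.

Lemma sum_le_const (I : finType) (P : pred I) (F : I -> nat) c :
  (forall i, P i -> F i <= c) -> \sum_(i | P i) F i <= #|I| * c.
Proof.
move=> H; apply: (@leq_trans (\sum_(i : I) c)).
  rewrite big_mkcond /=; apply: leq_sum => i _; case: ifP => // /H //.
by rewrite big_const iter_addn_0 mulnC cardE.
Qed.

Lemma N_bound k D (w : 'I_D -> trit k) : bad w ->
  #|[set b | [exists j, (cnt w j 0 <= k) && ((w b j : nat) != 1)]]| <= k * (2 * k).
Proof.
move=> Hb.
apply: (@leq_trans #|\bigcup_(j | cnt w j 0 <= k)
   ([set b | (w b j : nat) == 0] :|: [set b | (w b j : nat) == 2])|).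
  apply: subset_leq_card; apply/subsetP => b; rewrite inE => /existsP [j /andP [Hj Hn]].
  apply/bigcupP; exists j => //; rewrite !inE.
  by move: (ltn_ord (w b j)) Hn; case: (w b j) => [[|[|[|]]]].
apply: leq_trans (card_bigcup_le _ _) _.
apply: (@leq_trans (#|'I_k| * (2*k))); last by rewrite card_ord.
apply: sum_le_const => j Hj.
move: (leq_card_setU [set b | (w b j : nat) == 0] [set b | (w b j : nat) == 2]) => [h _].
apply: leq_trans h _; have := Hb j; rewrite Hj andbT -leqNgt.
change (cnt w j 2 <= cnt w j 0 -> cnt w j 0 + cnt w j 2 <= 2 * k); lia.
Qed.

Lemma Cr_bound k D (w : 'I_D -> trit k) :
  #|[set b | [exists j, (cnt w j 0 == k.+1) && ((w b j : nat) == 0)]]| <= k * k.+1.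
Proof.
apply: (@leq_trans #|\bigcup_(j | cnt w j 0 == k.+1) [set b | (w b j : nat) == 0]|).
  apply: subset_leq_card; apply/subsetP => b; rewrite inE => /existsP [j /andP [Hj Hn]].
  by apply/bigcupP; exists j => //; rewrite !inE.
apply: leq_trans (card_bigcup_le _ _) _.
apply: (@leq_trans (#|'I_k| * k.+1)); last by rewrite card_ord.
apply: sum_le_const => j /eqP Hj.
by rewrite -Hj.
Qed.

Lemma ones_val k (j : 'I_k) : (ones k j : nat) = 1.
Proof. by rewrite /ones ffunE inordK. Qed.

Lemma maxi k D (Q : tfamily k D) i t : in_h1 Q -> t \notin Q i ->
  exists w : 'I_D -> trit k, [/\ w i = t, forall x, x != i -> w x \in Q x & bad w].
Proof.
case=> HA HB Ht; have := HB i t Ht; rewrite /propA => Hn.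
apply: NNPP => Hc; apply: Hn => w Hw.
have Hx : forall x, x != i -> w x \in Q x.
  by move=> x /negbTE Hx; move: (Hw x); rewrite /add_to ffunE Hx.
case: (eqVneq (w i) t) => Ewi.
  apply: NNPP => Hg; apply: Hc; exists w; split => // j.
  apply/negP => /andP [h1 h2]; apply: Hg; by exists j.
apply: HA => x; case: (eqVneq x i) => [->|/Hx //].
by move: (Hw i); rewrite /add_to ffunE eqxx !inE (negbTE Ewi).
Qed.

Lemma bad_good k D (w : 'I_D -> trit k) : bad w ->
  (exists j : 'I_k, cnt w j 0 < cnt w j 2 /\ cnt w j 0 <= k) -> False.
Proof. by move=> Hb [j [h1 h2]]; move: (Hb j); rewrite h1 h2. Qed.

Lemma B_bound k D (Q : tfamily k D) i : in_h1 Q -> ones k \notin Q i ->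
  mult Q (Q i) <= (k * (2 * k)).+1.
Proof.
move=> Hh Ho; have [w [Ewi Hl Hb]] := maxi Hh Ho.
have HA := Hh.1.
set N := [set b | [exists j, (cnt w j 0 <= k) && ((w b j : nat) != 1)]].
apply: (@leq_trans #|i |: N|); last first.
  have := N_bound Hb; rewrite cardsU1 -/N; case: (i \notin N) => /=; lia.
apply: subset_leq_card; apply/subsetP => b; rewrite inE => /eqP Eb.
rewrite in_setU1; case: (eqVneq b i) => //= Nbi.
case: (boolP (b \in N)) => // Hn; exfalso.
have Hone : forall j, cnt w j 0 <= k -> (w b j : nat) = 1.
  move=> j Hj; apply/eqP; case: eqP => // /eqP Hne; exfalso.
  by apply: (negP Hn); rewrite inE; apply/existsP; exists j; rewrite Hj.
have Hb1 : bad (upd w i (w b)).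
  apply: upd_bad => // j; case: ifP => K.
    by rewrite Ewi ones_val.
  apply: val_inj; rewrite /= Ewi ones_val Hone //; lia.
apply: (bad_good Hb1); apply: HA => x; rewrite /upd; case: (eqVneq x i) => [->|/Hl //].
by rewrite -Eb; apply: Hl.
Qed.

Lemma A0_bound k D (Q : tfamily k D) i t (T : {set trit k}) : in_h1 Q ->
  t \in T -> t \notin Q i -> ones k \in Q i -> ones k \in T ->
  mult Q T <= k * (2 * k) + k * k.+1.
Proof.
move=> Hh HtT Ht Hoi HoT; have [w [Ewi Hl Hb]] := maxi Hh Ht.
have HA := Hh.1.
set N := [set b | [exists j, (cnt w j 0 <= k) && ((w b j : nat) != 1)]].
set Cr := [set b | [exists j, (cnt w j 0 == k.+1) && ((w b j : nat) == 0)]].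
apply: (@leq_trans #|N :|: Cr|); last first.
  apply: leq_trans (leq_card_setU _ _).1 _; apply: leq_add.
    exact: N_bound.
  exact: Cr_bound.
apply: subset_leq_card; apply/subsetP => b; rewrite inE => /eqP Eb.
rewrite inE; case: (boolP (b \in N)) => // Hn; case: (boolP (b \in Cr)) => // Hc; exfalso.
have Nbi : b != i.
  by apply/eqP => Ebi; move: Ht; rewrite -Ebi Eb HtT.
have Hone : forall j, cnt w j 0 <= k -> (w b j : nat) = 1.
  move=> j Hj; apply/eqP; case: eqP => // /eqP Hne; exfalso.
  by apply: (negP Hn); rewrite inE; apply/existsP; exists j; rewrite Hj.
have Hb1 : bad (upd w b (ones k)).
  apply: upd_bad => // j; case: ifP => K.
    move=> Hz; apply/orP; right.
    have : cnt w j 0 != k.+1.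
      apply/negP => He; apply: (negP Hc); rewrite inE; apply/existsP; exists j; by rewrite He.
    lia.
  apply: val_inj; rewrite /= ones_val Hone //; lia.
set w1 := upd w b (ones k).
set w2 := upd (upd w1 i (ones k)) b t.
have Ec : forall j x, cnt w2 j x = cnt w1 j x.
  move=> j x.
  have e1 := cnt_upd (upd w1 i (ones k)) b t j x.
  have e2 := cnt_upd w1 i (ones k) j x.
  have E1 : upd w1 i (ones k) b = ones k by rewrite /upd (negbTE Nbi) /w1 /upd eqxx.
  have E2 : w1 i = t by rewrite /w1 /upd eq_sym (negbTE Nbi).
  rewrite E1 in e1; rewrite E2 in e2; rewrite -/w2 in e1; lia.
have Hb2 : bad w2 by move=> j; rewrite !Ec; exact: Hb1.
apply: (bad_good Hb2); apply: HA => x; rewrite /w2 /upd.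
case: (eqVneq x b) => [->|Nxb]; first by rewrite Eb.
case: (eqVneq x i) => [->|Nxi] //.
by rewrite /w1 /upd (negbTE Nxb); apply: Hl.
Qed.

Lemma a1 k : 2 <= k -> 3 * (k * k) + k <= 4 ^ k.
Proof.
move=> h; elim: k h => [//|k IH] h.
case: (ltnP 2 k.+1) => h2.
  have := IH h2; rewrite expnS; nia.
have -> : k = 1 by lia. by [].
Qed.

Lemma a2 k : 2 <= k -> 3 ^ k + 2 * k <= 4 ^ k.
Proof.
move=> h; elim: k h => [//|k IH] h.
case: (ltnP 2 k.+1) => h2.
  have := IH h2; rewrite !expnS; lia.
have -> : k = 1 by lia. by [].
Qed.

Lemma arith k : 2 <= k ->
  2 ^ (3 ^ k) * (k * (2 * k) + k * k.+1) <= 2 ^ (4 ^ k).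
Proof.
move=> hk.
apply: (@leq_trans (2 ^ (3 ^ k) * 2 ^ (2 * k))).
  apply: leq_mul => //; rewrite expnM; change (2 ^ 2) with 4; have := a1 hk; lia.
rewrite -expnD; apply: leq_pexp2l => //; exact: a2.
Qed.

Lemma card_sets k : #|{set trit k}| = 2 ^ (3 ^ k).
Proof.
rewrite -cardsT -powersetT card_powerset cardsT /trit card_ffun !card_ord.
by [].
Qed.

Lemma mult_pos k D (Q : tfamily k D) S : 0 < mult Q S -> exists i, Q i = S.
Proof.
rewrite /mult card_gt0 => /set0Pn [i]; rewrite inE => /eqP; by exists i.
Qed.

Lemma card_classes k D (Q : tfamily k D) (P : pred {set trit k}) :
  #|[set i | P (Q i)]| <= \sum_(S | P S) mult Q S.
Proof.
apply: leq_trans (card_bigcup_le P (fun S => [set i | Q i == S])).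
apply: subset_leq_card; apply/subsetP => i; rewrite inE => HP.
by apply/bigcupP; exists (Q i) => //; rewrite inE.
Qed.

Lemma heavy_ones k D (Q : tfamily k D) (S : {set trit k}) : 1 <= k -> in_h1 Q ->
  k * (2 * k) + k * k.+1 < mult Q S -> ones k \in S.
Proof.
move=> hk Hh HS; have [i Ei] := mult_pos (leq_ltn_trans (leq0n _) HS).
apply/negPn/negP => Ho; rewrite -Ei in Ho HS.
have := B_bound Hh Ho; nia.
Qed.

Lemma heavy_uniq k D (Q : tfamily k D) (S T : {set trit k}) : in_h1 Q ->
  ones k \in S -> ones k \in T ->
  k * (2 * k) + k * k.+1 < mult Q S -> k * (2 * k) + k * k.+1 < mult Q T -> S = T.
Proof.
move=> Hh HoS HoT HS HT; apply: NNPP => Ne.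
have [t Ht] : exists t, (t \in S) != (t \in T).
  apply: NNPP => Hc; apply: Ne; apply/setP => t.
  by apply/eqP; apply/negPn/negP => H; apply: Hc; exists t.
case: (boolP (t \in S)) Ht => HtS /= Ht.
- have HtT : t \notin T by move: Ht; case: (t \in T).
  have [i Ei] := mult_pos (leq_ltn_trans (leq0n _) HT).
  rewrite -Ei in HtT HoT.
  by have := A0_bound Hh HtS HtT HoT HoS; lia.
- have HtT : t \in T by move: Ht; case: (t \in T).
  have [i Ei] := mult_pos (leq_ltn_trans (leq0n _) HS).
  rewrite -Ei in HtS HoS.
  by have := A0_bound Hh HtT HtS HoS HoT; lia.
Qed.

Theorem lemma5 (k D : nat) (Q : tfamily k D) :
  2 <= k -> 2 ^ (4 ^ k + 1) <= D -> in_h1 Q ->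
  exists P : {set trit k},
    [/\ exists i : 'I_D, Q i = P,
        D - 2 ^ (4 ^ k) <= mult Q P,
        ones k \in P &
        forall P' : {set trit k},
          (exists i : 'I_D, Q i = P') ->
          D - 2 ^ (4 ^ k) <= mult Q P' -> ones k \in P' -> P' = P].
Proof.
move=> hk hD Hh.
set c := k * (2 * k) + k * k.+1.
set M := 2 ^ (4 ^ k).
have Har : 2 ^ (3 ^ k) * c <= M := arith hk.
have HM : 2 * M <= D by move: hD; rewrite expnD expn1 /M; lia.
have Hc1 : 1 <= 2 ^ (3 ^ k) by rewrite expn_gt0.
have Hc2 : 2 <= 2 ^ (3 ^ k).
  by rewrite -{1}(expn1 2); apply: leq_pexp2l => //; rewrite expn_gt0.
have Hcpos : 0 < c by rewrite /c; nia.
have hk1 : 1 <= k by lia.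
have [P HP] : exists P, c < mult Q P.
  case: (boolP [exists S, c < mult Q S]) => [/existsP //|Hn].
  exfalso.
  have Hall : forall S, mult Q S <= c.
    by move=> S; rewrite leqNgt; apply: contra Hn => H; apply/existsP; exists S.
  have := card_classes Q (fun _ => true).
  have -> : #|[set i : 'I_D | (fun _ => true) (Q i)]| = D by apply: etrans (card_ord D); apply: eq_card => i; rewrite inE.
  move=> h; have := leq_trans h (sum_le_const (fun S _ => Hall S)).
  rewrite card_sets; nia.
have HoP := heavy_ones hk1 Hh HP.
have [i0 Ei0] := mult_pos (leq_ltn_trans (leq0n _) HP).
have Hother : forall S, S != P -> mult Q S <= c.
  move=> S NS; case: (posnP (mult Q S)) => [->//|Sp].
  have [j Ej] := mult_pos Sp.
  case: (boolP (ones k \in S)) => HoS.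
    rewrite leqNgt; apply/negP => HS; move/eqP: NS; apply.
    exact: heavy_uniq Hh HoS HoP HS HP.
  rewrite -Ej in HoS *; have := B_bound Hh HoS; rewrite /c; nia.
have Hcnt : #|[set i | Q i != P]| <= M.
  apply: leq_trans (card_classes Q (fun S => S != P)) _.
  apply: leq_trans (sum_le_const (fun S H => Hother S H)) _.
  by rewrite card_sets.
have Hsplit : mult Q P + #|[set i | Q i != P]| = D.
  have e := cardsC [set i | Q i == P]; rewrite card_ord in e.
  rewrite /mult; apply: (etrans _ e).
  congr (_ + _); apply: eq_card => i; by rewrite !inE.
have HcM : c < M by nia.
exists P; split => //.
- by exists i0.
- lia.
- move=> P' _ HP' HoP'.
  apply: (heavy_uniq Hh HoP' HoP) => //; lia.
Qed.
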